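(* Let $n\ge 5$ be even and let $x,y$ be adjacent vertices of $Q_n$ with $f_n(x)+f_n(y)=\operatorname{str}_{f_n}(Q_n)$. If $x$ and $y$ both begin with $10$, then $$\operatorname{str}_{f_n}(Q_n)\le \operatorname{str}_{f_{n-2}}(Q_{n-2})+3\cdot 2^{n-2}+\binom{n-3}{\lceil (n-3)/2\rceil}+\binom{n-2}{\lceil (n-2)/2\rceil}.$$
   Context: $Q_n$ is the $n$-dimensional hypercube: vertices are the $n$-bit strings, adjacent iff they differ in exactly one position. For a bijection $f:V(G)\to\{1,\dots,|V(G)|\}$, $\operatorname{str}_f(G)=\max\{f(u)+f(v):uv\in E(G)\}$. An $n$-bit string is $x_1\cdots x_n$, $x_i\in\{0,1\}$; its weight is its number of $1$s. Lexicographic order: $x<y$ if for some $k$, $x_j=y_j$ for $j<k$ and $x_k<y_k$. $S_n^i$ is the sequence of $n$-bit strings of weight $i$ in increasing lexicographic order; $R_n^i$ is the same set in decreasing lexicographic order. $S_n$ is the concatenation $(R_n^1,R_n^3,\dots,R_n^{n-1},S_n^n,S_n^{n-2},\dots,S_n^2,S_n^0)$ for even $n$ and $(R_n^1,R_n^3,\dots,R_n^{n-2},R_n^n,S_n^{n-1},\dots,S_n^2,S_n^0)$ for odd $n$; $f_n$ maps the string in position $j$ of $S_n$ to $j$. *)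

(* Defs.v *)
From mathcomp Require Import all_boot.
Set Implicit Arguments. Unset Strict Implicit. Unset Printing Implicit Defensive.

(* Vertices of Q_n: n-bit strings x_1 ... x_n, as n.-tuple bool
   (position 1 of the paper is index 0 of the tuple). *)
Definition bits (n : nat) := n.-tuple bool.

Definition weight (s : seq bool) : nat := count id s.

Definition hadj n (x y : bits n) : bool :=
  (\sum_(i < n) (tnth x i != tnth y i)) == 1.

Fixpoint lexlt (x y : seq bool) : bool :=
  match x, y with
  | a :: x', b :: y' => (~~ a && b) || ((a == b) && lexlt x' y')
  | _, _ => false
  end.
Definition lexle (x y : seq bool) : bool := (x == y) || lexlt x y.

Definition Sni (n i : nat) : seq (bits n) :=
  sort (fun x y : bits n => lexle x y) [seq x : bits n <- enum {: bits n} | weight x == i].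
Definition Rni (n i : nat) : seq (bits n) := rev (Sni n i).

(* S_n: R^1, R^3, ... (odd weights increasing), then S^m, S^{m-2}, ..., S^0
   (even weights decreasing).  For odd n, R_n^n = S_n^n (one string), so this
   matches both cases of the paper's definition. *)
Definition Sn (n : nat) : seq (bits n) :=
  flatten [seq Rni n i | i <- [seq i <- iota 0 n.+1 | odd i]] ++
  flatten [seq Sni n i | i <- rev [seq i <- iota 0 n.+1 | ~~ odd i]].

Definition fn (n : nat) (x : bits n) : nat := (index x (Sn n)).+1.

Definition strQ (n : nat) : nat :=
  \max_(p : bits n * bits n | hadj p.1 p.2) (fn p.1 + fn p.2).

(* Main.v *)
Require Import Defs.
From mathcomp Require Import all_boot.
From mathcomp Require Import zify.
Set Implicit Arguments. Unset Strict Implicit. Unset Printing Implicit Defensive.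

Lemma bin_step N k : k.*2 < N -> 'C(N, k) <= 'C(N, k.+1).
Proof.
move=> hk.
have e := mul_bin_left N k.
have h1 : 'C(N, k) * k.+1 <= 'C(N, k.+1) * k.+1.
  rewrite [X in _ <= X]mulnC e mulnC; apply: leq_mul => //; lia.
by rewrite leq_pmul2r in h1.
Qed.

Lemma bin_up N k j : k <= j -> j <= uphalf N -> 'C(N, k) <= 'C(N, j).
Proof.
move=> hkj; elim: j hkj => [|j IH] hkj hj.
  by rewrite leqn0 in hkj; rewrite (eqP hkj).
case: (ltngtP k j.+1) hkj => // [hlt _|-> //].
rewrite uphalf_half in hj.
apply: (leq_trans (IH _ _)); [lia|lia|apply: bin_step; lia].
Qed.

Lemma bin_max N k : 'C(N, k) <= 'C(N, uphalf N).
Proof.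
case: (leqP k (uphalf N)) => hk; first exact: bin_up.
case: (leqP k N) => hkN; last by rewrite bin_small.
rewrite -bin_sub //; apply: bin_up => //; rewrite uphalf_half in hk *; lia.
Qed.

Lemma lexlt_irr s : lexlt s s = false.
Proof. by elim: s => [|a s IH] //=; rewrite IH eqxx andbF andNb. Qed.

Lemma lexlt_trans a b c : lexlt a b -> lexlt b c -> lexlt a c.
Proof.
elim: a b c => [|x a IH] [|y b] [|z c] //=.
case: x; case: y; case: z => //=; rewrite ?andbF ?orbF //=; try exact: IH.
Qed.

Lemma lexlt_asym a b : lexlt a b -> lexlt b a = false.
Proof. move=> h; apply/negP => h2; have := lexlt_trans h h2; by rewrite lexlt_irr. Qed.

Lemma lexlt_total a b : size a = size b -> a != b -> lexlt a b || lexlt b a.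
Proof.
elim: a b => [|x a IH] [|y b] //= [hs]; rewrite eqseq_cons negb_and => hne.
case: x y hne => [] [] //=; rewrite ?eqxx /= => hne; exact: IH.
Qed.

Lemma lexlt_neq a b : lexlt a b -> a != b.
Proof. by apply: contraTneq => ->; rewrite lexlt_irr. Qed.

Lemma lexlt_compl a b : size a = size b ->
  lexlt (map negb a) (map negb b) = lexlt b a.
Proof.
elim: a b => [|x a IH] [|y b] //= [hs]; rewrite IH //.
by case: x; case: y.
Qed.

Lemma lexle_trans : transitive lexle.
Proof.
move=> b a c; rewrite /lexle => /orP[/eqP->//|h1] /orP[/eqP<-|h2].
  by rewrite h1 orbT.
by rewrite (lexlt_trans h1 h2) orbT.
Qed.

Lemma lexle_anti a b : lexle a b -> lexle b a -> a = b.
Proof.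
rewrite /lexle => /orP[/eqP//|h1] /orP[/eqP//|h2].
by rewrite lexlt_asym in h2.
Qed.

Fixpoint allb (k : nat) : seq (seq bool) :=
  if k is k'.+1 then [seq true :: s | s <- allb k'] ++ [seq false :: s | s <- allb k']
  else [:: [::]].

Lemma cons_inj (b : bool) : injective (cons b).
Proof. by move=> u v []. Qed.

Lemma mem_allb k s : (s \in allb k) = (size s == k).
Proof.
elim: k s => [|k IH] [|a s] //=; rewrite mem_cat.
- by apply/orP => -[] /mapP[? _].
- rewrite eqSS -IH; case: a.
  + rewrite (mem_map (@cons_inj _)).
    have -> : (true :: s \in [seq false :: s0 | s0 <- allb k]) = false by apply/mapP => -[u _].
    by rewrite ?orbF.
  + rewrite (mem_map (@cons_inj _)).
    have -> : (false :: s \in [seq true :: s0 | s0 <- allb k]) = false by apply/mapP => -[u _].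
    by rewrite ?orbF.
Qed.

Lemma uniq_allb k : uniq (allb k).
Proof.
elim: k => [|k IH] //=; rewrite cat_uniq !map_inj_uniq //= ?IH; try by move=> u v [].
rewrite andbT; apply/hasPn => s /mapP[u _ ->]; by apply/mapP => -[v _].
Qed.

Lemma size_allb k : size (allb k) = 2 ^ k.
Proof. by elim: k => [|k IH] //=; rewrite size_cat !size_map IH expnS mul2n addnn. Qed.

Lemma count_allbS k (p : pred (seq bool)) :
  count p (allb k.+1) = count (fun s => p (true :: s)) (allb k) + count (fun s => p (false :: s)) (allb k).
Proof. by rewrite /= count_cat !count_map. Qed.

Lemma perm_allb k : perm_eq (map val (enum {: bits k})) (allb k).
Proof.
apply: uniq_perm; first by rewrite map_inj_uniq ?enum_uniq //; exact: val_inj.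
  exact: uniq_allb.
move=> s; rewrite mem_allb; apply/mapP/idP => [[t _ ->]|hs]; first by rewrite size_tuple.
by exists (Tuple hs); rewrite ?mem_enum.
Qed.

Lemma count_bits k (p : pred (seq bool)) :
  count (fun z : bits k => p z) (enum {: bits k}) = count p (allb k).
Proof. have h := perm_allb k. move/permP: h => h. by rewrite -h [RHS]count_map. Qed.

Lemma count_compl k (p : pred (seq bool)) :
  count p (allb k) = count (fun s => p (map negb s)) (allb k).
Proof.
transitivity (count p (map (map negb) (allb k))); last by rewrite count_map.
suff /permP h : perm_eq (allb k) (map (map negb) (allb k)) by apply: h.
apply: uniq_perm; rewrite ?uniq_allb ?map_inj_uniq ?uniq_allb //.
  by apply: (can_inj (g := map negb)) => s; rewrite -map_comp map_id_in // => b _ /=; rewrite negbK.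
move=> s; rewrite mem_allb; apply/idP/mapP => [hs|[u hu ->]]; last by rewrite size_map -mem_allb.
exists (map negb s); first by rewrite mem_allb size_map.
by rewrite -map_comp map_id_in // => b _ /=; rewrite negbK.
Qed.

Lemma weight_compl s : weight (map negb s) = size s - weight s.
Proof.
rewrite /weight -(count_predC id s) count_map addKn; apply: eq_count => b //.
Qed.

Lemma weight_le s : weight s <= size s.
Proof. exact: count_size. Qed.

Lemma index_sorted (T : eqType) (le : rel T) (s : seq T) x :
  transitive le -> (forall a b, le a b -> le b a -> a = b) ->
  sorted le s -> uniq s -> x \in s ->
  index x s = count (fun z => le z x && (z != x)) s.
Proof.
move=> tr an; elim: s => [//|a s IH] /= hs /andP[han hu] hx.
have hall := order_path_min tr hs.
have hss := path_sorted hs.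
case: (eqVneq a x) => [eax|nax].
  subst a; rewrite andbF add0n; apply/esym/eqP; rewrite -leqn0 leqNgt -has_count.
  apply/hasPn => z hz; apply/negP => /andP[hzx hne].
  have := an _ _ hzx (allP hall z hz) => ezx; by rewrite ezx eqxx in hne.
rewrite andbT.
have hxs : x \in s by move: hx; rewrite inE eq_sym (negbTE nax).
by rewrite (allP hall x hxs) IH.
Qed.

Lemma index_flatten (T I : eqType) (F : I -> seq T) (c : T -> I) l1 l2 x :
  (forall i z, z \in F i -> c z = i) -> x \in F (c x) -> c x \notin l1 ->
  index x (flatten (map F (l1 ++ c x :: l2))) =
  sumn (map (fun i => size (F i)) l1) + index x (F (c x)).
Proof.
move=> hF hx; elim: l1 => [|i l1 IH] /=; first by rewrite index_cat hx.
rewrite inE negb_or => /andP[hne hn].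
have hxi : x \notin F i by apply/negP => /hF e; rewrite e eqxx in hne.
by rewrite index_cat (negbTE hxi) IH // addnA.
Qed.

Lemma sumn_cnt (T : eqType) (s : seq T) (c : T -> nat) l : uniq l ->
  sumn [seq count (fun z => c z == i) s | i <- l] = count (fun z => c z \in l) s.
Proof.
elim: l => [|i l IH] /=; first by rewrite count_pred0.
move=> /andP[hi hu]; rewrite IH //.
rewrite -count_predUI.
have -> : count (predI (fun z => c z == i) (fun z => c z \in l)) s = 0.
  apply/eqP; rewrite -leqn0 leqNgt -has_count; apply/hasPn => z _ /=.
  by apply/negP => /andP[/eqP e he]; rewrite e in he; rewrite he in hi.
rewrite addn0; apply: eq_count => z /=; by rewrite inE.
Qed.

Section SniFacts.
Variables (n i : nat).

Lemma mem_Sni (t : bits n) : (t \in Sni n i) = (weight t == i).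
Proof. by rewrite /Sni mem_sort mem_filter mem_enum andbT. Qed.

Lemma lexle_total_bits : total (fun x y : bits n => lexle x y).
Proof.
move=> x y; rewrite /lexle; case: (eqVneq (x : seq bool) y) => [e|ne] //=.
by apply: lexlt_total; rewrite ?size_tuple.
Qed.

Lemma sorted_Sni : sorted lexle (map val (Sni n i)).
Proof. by rewrite sorted_map; apply: sort_sorted; exact: lexle_total_bits. Qed.

Lemma uniq_Sni : uniq (map val (Sni n i)).
Proof.
rewrite map_inj_uniq; last exact: val_inj.
by rewrite sort_uniq filter_uniq // enum_uniq.
Qed.

Lemma count_Sni (P : pred (seq bool)) :
  count P (map val (Sni n i)) = count (fun z => (weight z == i) && P z) (allb n).
Proof.
rewrite count_map.
have hp : perm_eq (Sni n i) [seq x : bits n <- enum {: bits n} | weight x == i].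
  by rewrite /Sni perm_sort.
move/permP: hp => ->; rewrite count_filter -count_bits.
by apply: eq_count => z /=; rewrite andbC.
Qed.

Lemma size_Sni : size (map val (Sni n i)) = count (fun z => weight z == i) (allb n).
Proof. by rewrite -(count_predT (map _ _)) count_Sni; apply: eq_count => z; rewrite andbT. Qed.

Lemma wt_Sni z : z \in map val (Sni n i) -> weight z = i.
Proof. by move=> /mapP[t ht ->]; move: ht; rewrite mem_Sni => /eqP. Qed.

End SniFacts.

Lemma lexle_neq a b : lexle a b && (b != a) = lexlt a b.
Proof.
rewrite /lexle; case: (eqVneq a b) => [->|ne] /=; first by rewrite lexlt_irr.
by rewrite andbT.
Qed.

Lemma filter_iota_split (p : pred nat) n w : w <= n -> p w ->
  [seq i <- iota 0 n.+1 | p i] =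
  [seq i <- iota 0 w | p i] ++ w :: [seq i <- iota w.+1 (n - w) | p i].
Proof.
move=> hw hp; have -> : n.+1 = w + (n - w).+1 by lia.
by rewrite iotaD filter_cat add0n /= hp.
Qed.

Lemma index_val n (x : bits n) (s : seq (bits n)) : index x s = index (val x) (map val s).
Proof. by rewrite index_map //; exact: val_inj. Qed.

Lemma fn_odd n (x : bits n) : odd (weight x) ->
  fn x = count (fun z => odd (weight z) && (weight z < weight x)) (allb n)
       + count (fun z => (weight z == weight x) && lexlt x z) (allb n) + 1.
Proof.
move=> hodd; rewrite /fn index_val /Sn map_cat !map_flatten -!map_comp.
set F := (fun i => map val (Rni n i)).
set w := weight x.
have hwn : w <= n by rewrite /w -{2}(size_tuple x) weight_le.
have hF : forall i z, z \in F i -> weight z = i.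
  by move=> i0 z; rewrite /F /Rni map_rev mem_rev; exact: wt_Sni.
have hx : val x \in F (weight (val x)).
  by rewrite /F /Rni map_rev mem_rev map_f // mem_Sni.
rewrite (eq_map (f := map val \o Rni n) (g := F)) //.
rewrite index_cat.
have hx1 : val x \in flatten [seq F i | i <- [seq i <- iota 0 n.+1 | odd i]].
  apply/flatten_mapP; exists (weight x); [by rewrite mem_filter hodd mem_iota /= ltnS | exact hx].
rewrite hx1 (filter_iota_split hwn hodd) index_flatten //; last first.
  by rewrite mem_filter mem_iota add0n /w ltnn !andbF.
have e1 : sumn [seq size (F i) | i <- iota 0 w & odd i] =
    count (fun z => odd (weight z) && (weight z < w)) (allb n).
  rewrite (eq_map (g := fun i => count (fun z => weight z == i) (allb n))); last first.
    by move=> i0; rewrite /F /Rni map_rev size_rev size_Sni.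
  rewrite (sumn_cnt (allb n) weight) ?filter_uniq ?iota_uniq //.
  by apply: eq_count => z; rewrite mem_filter mem_iota.
have e2 : index (val x) (F (weight (val x))) = count (fun z => (weight z == w) && lexlt x z) (allb n).
  rewrite /F /Rni map_rev.
  have tr : transitive (fun a b : seq bool => lexle b a).
    by move=> b a c h1 h2; exact: lexle_trans h2 h1.
  rewrite (@index_sorted _ (fun a b => lexle b a)) //; last first.
  + by rewrite mem_rev; move: hx; rewrite /F /Rni map_rev mem_rev.
  + by rewrite rev_uniq uniq_Sni.
  + by rewrite rev_sorted; exact: sorted_Sni.
  + by move=> a b h1 h2; exact: lexle_anti.
  rewrite count_rev count_Sni; apply: eq_count => z /=.
  by rewrite lexle_neq.
by rewrite e1 e2 addn1.
Qed.

Lemma fn_even n (x : bits n) : ~~ odd (weight x) ->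
  fn x = count (fun z => odd (weight z)) (allb n)
       + count (fun z => ~~ odd (weight z) && (weight x < weight z)) (allb n)
       + count (fun z => (weight z == weight x) && lexlt z x) (allb n) + 1.
Proof.
move=> hev; rewrite /fn index_val /Sn map_cat !map_flatten -!map_comp.
set F := (fun i => map val (Rni n i)).
set G := (fun i => map val (Sni n i)).
set w := weight x.
have hwn : w <= n by rewrite /w -{2}(size_tuple x) weight_le.
rewrite (eq_map (f := map val \o Rni n) (g := F)) //.
rewrite (eq_map (f := map val \o Sni n) (g := G)) //.
have hG : forall i z, z \in G i -> weight z = i by move=> i0 z; exact: wt_Sni.
have hx : val x \in G (weight (val x)) by rewrite /G map_f // mem_Sni.
rewrite index_cat.
have hx1 : val x \notin flatten [seq F i | i <- [seq i <- iota 0 n.+1 | odd i]].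
  apply/negP => /flatten_mapP[i]; rewrite mem_filter => /andP[hi _].
  rewrite /F /Rni map_rev mem_rev => /wt_Sni e; move: hev; by rewrite /w e hi.
rewrite (negbTE hx1).
have e0 : size (flatten [seq F i | i <- [seq i <- iota 0 n.+1 | odd i]]) =
    count (fun z => odd (weight z)) (allb n).
  rewrite size_flatten /shape -map_comp.
  rewrite (eq_map (g := fun i => count (fun z => weight z == i) (allb n))); last first.
    by move=> i0; rewrite /F /Rni /= map_rev size_rev size_Sni.
  rewrite (sumn_cnt (allb n) weight) ?filter_uniq ?iota_uniq //.
  apply: eq_in_count => z; rewrite mem_allb => /eqP hz.
  rewrite mem_filter mem_iota /= ltnS -hz weight_le andbT //.
rewrite e0 (filter_iota_split hwn hev) rev_cat /= rev_cons cat_rcons.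
rewrite index_flatten //; last by rewrite mem_rev mem_filter mem_iota ltnn andbF.
have e1 : sumn [seq size (G i) | i <- rev [seq i <- iota w.+1 (n - w) | ~~ odd i]] =
    count (fun z => ~~ odd (weight z) && (w < weight z)) (allb n).
  rewrite (eq_map (g := fun i => count (fun z => weight z == i) (allb n))); last first.
    by move=> i0; rewrite /G size_Sni.
  rewrite (sumn_cnt (allb n) weight) ?rev_uniq ?filter_uniq ?iota_uniq //.
  apply: eq_in_count => z; rewrite mem_allb => /eqP hz.
  have := weight_le z; rewrite hz => hle.
  rewrite mem_rev mem_filter mem_iota; congr (_ && _); lia.
have e2 : index (val x) (G (weight (val x))) = count (fun z => (weight z == w) && lexlt z x) (allb n).
  rewrite /G (@index_sorted _ lexle) //; last first.
  + by rewrite uniq_Sni.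
  + exact: sorted_Sni.
  + by move=> a b h1 h2; exact: lexle_anti.
  + exact: lexle_trans.
  rewrite count_Sni; apply: eq_count => z /=.
  by rewrite (eq_sym z) lexle_neq.
by rewrite e1 e2 addn1 addnA.
Qed.

Definition Kp k (p : nat -> bool) := count (fun z => p (weight z)) (allb k).
Arguments Kp : simpl never.

Lemma oddE x : odd x = (x %% 2 == 1). Proof. by rewrite modn2; case: (odd x). Qed.

Lemma weight_cons b s : weight (b :: s) = b + weight s.
Proof. by []. Qed.

Lemma KpS k p : Kp k.+1 p = Kp k (fun j => p j.+1) + Kp k p.
Proof. by rewrite /Kp count_allbS. Qed.

Lemma KpS2 k p : Kp k.+2 p = Kp k (fun j => p j.+2) + 2 * Kp k (fun j => p j.+1) + Kp k p.
Proof. rewrite KpS (KpS k) (KpS k p); lia. Qed.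

Lemma count_add_in (T : eqType) (s : seq T) (P Q R : pred T) :
  (forall z, z \in s -> P z + Q z = R z) -> count P s + count Q s = count R s.
Proof.
elim: s => [|z s IH] //= h.
rewrite -(h z (mem_head _ _)) -IH; first lia.
by move=> u hu; apply: h; rewrite inE hu orbT.
Qed.

Lemma Kp_add k (P Q R : nat -> bool) : (forall j, j <= k -> P j + Q j = R j) -> Kp k P + Kp k Q = Kp k R.
Proof.
move=> h; apply: count_add_in => z; rewrite mem_allb => /eqP hz.
by apply: h; rewrite -hz weight_le.
Qed.

Lemma Kp_ext k P Q : (forall j, j <= k -> P j = Q j) -> Kp k P = Kp k Q.
Proof.
move=> h; apply: eq_in_count => z; rewrite mem_allb => /eqP hz.
by apply: h; rewrite -hz weight_le.
Qed.

Lemma Kp0 k P : (forall j, j <= k -> P j = false) -> Kp k P = 0.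
Proof.
move=> h; rewrite (@Kp_ext k P (fun _ => false)) //.
by rewrite /Kp count_pred0.
Qed.

Lemma Kp_compl k P : Kp k P = Kp k (fun j => P (k - j)).
Proof.
rewrite /Kp count_compl; apply: eq_in_count => z; rewrite mem_allb => /eqP hz.
by rewrite weight_compl hz.
Qed.

Lemma Kp_tot k : Kp k (fun _ => true) = 2 ^ k.
Proof. by rewrite /Kp count_predT size_allb. Qed.

Lemma Kp_bin k i : Kp k (fun j => j == i) = 'C(k, i).
Proof.
elim: k i => [|k IH] i; first by case: i.
rewrite KpS; case: i => [|i].
  rewrite Kp0 // IH bin0 //.
rewrite binS -IH -(IH i) addnC; congr (_ + _); apply: Kp_ext => j _; by [].
Qed.

Lemma Kp_eo k : 0 < k -> Kp k (fun j => ~~ odd j) = Kp k odd.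
Proof.
case: k => // k _; rewrite !KpS /=.
rewrite (@Kp_ext k (fun j => ~~ ~~ odd j) odd); last by move=> j _; rewrite negbK.
by rewrite addnC.
Qed.

Definition E m k := Kp m (fun j => ~~ odd j && (j < k)).
Definition O m k := Kp m (fun j => odd j && (j < k)).
Definition UE m k := Kp m (fun j => ~~ odd j && (k <= j)).
Definition UO m k := Kp m (fun j => odd j && (k <= j)).
Definition cc m k := Kp m (fun j => j == k).
Definition Ke m := Kp m (fun j => ~~ odd j).
Definition Ko m := Kp m odd.

Lemma alt_odd m k : odd k -> O m.+1 k.+1 = E m.+1 k.+1 + 'C(m, k).
Proof.
move=> hk; rewrite /O /E !KpS -Kp_bin.
have h1 : Kp m (fun j => odd j && (j < k)) + Kp m (fun j => j == k) = Kp m (fun j => odd j && (j < k.+1)).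
  apply: Kp_add => j _; rewrite !oddE in hk *; lia.
have h2 : Kp m (fun j => ~~ odd j && (j < k)) = Kp m (fun j => ~~ odd j && (j < k.+1)).
  apply: Kp_ext => j _; rewrite !oddE in hk *; lia.
have h3 : Kp m (fun j => odd j.+1 && (j.+1 < k.+1)) = Kp m (fun j => ~~ odd j && (j < k)).
  by apply: Kp_ext => j _ /=.
have h4 : Kp m (fun j => ~~ odd j.+1 && (j.+1 < k.+1)) = Kp m (fun j => odd j && (j < k)).
  by apply: Kp_ext => j _ /=; rewrite negbK.
rewrite h3 h4 -h1 -h2; lia.
Qed.

Lemma bin_le_ctr m k : 'C(m, k) <= 'C(m.-1, uphalf m.-1) + 'C(m, uphalf m).
Proof. by apply: leq_trans (bin_max m k) _; rewrite leq_addl. Qed.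

Lemma bin_le_ctr' m k : 'C(m.-1, k) <= 'C(m.-1, uphalf m.-1) + 'C(m, uphalf m).
Proof. by apply: leq_trans (bin_max m.-1 k) _; rewrite leq_addr. Qed.

Ltac pw := let j := fresh "j" in move=> j ? /=; rewrite ?oddE; lia.

Lemma tot_eo m : 0 < m -> Ke m + Ko m = 2 ^ m /\ Ke m = Ko m.
Proof.
move=> hm; split; last exact: Kp_eo.
rewrite -Kp_tot /Ke /Ko; apply: Kp_add => j _; by case: (odd j).
Qed.

Lemma alt_bound1 m a : 2 <= m -> ~~ odd a ->
  O m a <= E m a + ('C(m.-1, uphalf m.-1) + 'C(m, uphalf m)).
Proof.
case: a => [|k] hm ha.
  by rewrite /O Kp0 //; pw.
case: m hm => // m' hm.
rewrite alt_odd; last by move: ha; rewrite /= negbK.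
by rewrite leq_add2l; exact: (bin_le_ctr' m'.+1 k).
Qed.

Lemma alt_bound2 m b : 2 <= m -> odd b -> O m b.+1 = E m b.+1 + 'C(m.-1, b).
Proof. case: m => // m' _ hb; exact: alt_odd. Qed.

Lemma final1 m a : ~~ odd m -> 2 <= m -> ~~ odd a -> a.+1 <= m ->
 Kp m.+2 (fun j => odd j && (j < a.+1)) + Kp m (fun j => j.+2 == a.+1)
 + (Kp m.+2 odd + Kp m.+2 (fun j => ~~ odd j && (a.+2 < j)) + Kp m.+1 (fun j => j == a.+2))
 <= Kp m odd + Kp m (fun j => ~~ odd j && (m - a < j)) + Kp m (fun j => odd j && (j < m - a.+1))
    + 3 * 2 ^ m + 'C(m.-1, uphalf m.-1) + 'C(m, uphalf m).
Proof.
move=> hm hm2 ha ham.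
have hm' := hm; have ha' := ha; rewrite oddE in hm' ha'.
have h1 : Kp m.+2 (fun j => odd j && (j < a.+1)) = Kp m (fun j => odd j && (j.+1 < a)) + 2 * E m a + O m a.
  rewrite KpS2 /E /O; congr (_ + 2 * _ + _); apply: Kp_ext; pw.
have h2 : Kp m (fun j => odd j && (j.+1 < a)) + Kp m (fun j => j.+2 == a.+1) = O m a.
  apply: Kp_add; pw.
have h3 : Kp m.+2 odd = Ko m + 2 * Ke m + Ko m.
  rewrite KpS2 /Ko /Ke; congr (_ + 2 * _ + _); apply: Kp_ext; pw.
have h4 : Kp m.+2 (fun j => ~~ odd j && (a.+2 < j)) = UE m a.+1 + 2 * UO m a.+2 + UE m a.+3.
  rewrite KpS2 /UE /UO; congr (_ + 2 * _ + _); apply: Kp_ext; pw.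
have h5 : Kp m.+1 (fun j => j == a.+2) = cc m a.+1 + cc m a.+2.
  rewrite KpS /cc; congr (_ + _); apply: Kp_ext; pw.
have h6 : Kp m (fun j => ~~ odd j && (m - a < j)) = E m a.
  rewrite Kp_compl /E; apply: Kp_ext; pw.
have h7 : Kp m (fun j => odd j && (j < m - a.+1)) = UO m a.+2.
  rewrite Kp_compl /UO; apply: Kp_ext; pw.
have h8a : UE m a.+1 + E m a.+1 = Ke m by apply: Kp_add; pw.
have h8b : UO m a.+2 + O m a.+2 = Ko m by apply: Kp_add; pw.
have h8c : UE m a.+3 + E m a.+3 = Ke m by apply: Kp_add; pw.
have h9a : E m a + cc m a = E m a.+1 by apply: Kp_add; pw.
have h9b : E m a.+1 + cc m a.+2 = E m a.+3 by apply: Kp_add; pw.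
have h9c : O m a + cc m a.+1 = O m a.+2 by apply: Kp_add; pw.
have [h10 h10'] := tot_eo (ltnW hm2).
have h11 := alt_bound1 hm2 ha.
have h12 : Kp m odd = Ko m by [].
lia.
Qed.

Lemma final2 m b : ~~ odd m -> 2 <= m -> odd b -> b.+1 <= m ->
 Kp m.+2 (fun j => odd j && (j < b.+2)) + Kp m (fun j => j.+2 == b.+2)
 + (Kp m.+2 odd + Kp m.+2 (fun j => ~~ odd j && (b.+1 < j)) + Kp m.+1 (fun j => j == b.+1))
 <= Kp m odd + Kp m (fun j => ~~ odd j && (m - b.+1 < j)) + Kp m (fun j => odd j && (j < m - b))
    + 3 * 2 ^ m + 'C(m.-1, uphalf m.-1) + 'C(m, uphalf m).
Proof.
move=> hm hm2 hb hbm.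
have hm' := hm; have hb' := hb; rewrite oddE in hm' hb'.
have g1 : Kp m.+2 (fun j => odd j && (j < b.+2)) = O m b + 2 * E m b.+1 + O m b.+2.
  rewrite KpS2 /E /O; congr (_ + 2 * _ + _); apply: Kp_ext; pw.
have g2 : Kp m (fun j => j.+2 == b.+2) = cc m b by rewrite /cc; apply: Kp_ext; pw.
have g3 : Kp m.+2 odd = Ko m + 2 * Ke m + Ko m.
  rewrite KpS2 /Ko /Ke; congr (_ + 2 * _ + _); apply: Kp_ext; pw.
have g4 : Kp m.+2 (fun j => ~~ odd j && (b.+1 < j)) = UE m b + 2 * UO m b.+1 + UE m b.+2.
  rewrite KpS2 /UE /UO; congr (_ + 2 * _ + _); apply: Kp_ext; pw.
have g5 : Kp m.+1 (fun j => j == b.+1) = cc m b + cc m b.+1.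
  rewrite KpS /cc; congr (_ + _); apply: Kp_ext; pw.
have g6 : Kp m (fun j => ~~ odd j && (m - b.+1 < j)) = E m b.+1.
  rewrite Kp_compl /E; apply: Kp_ext; pw.
have g7 : Kp m (fun j => odd j && (j < m - b)) = UO m b.+1.
  rewrite Kp_compl /UO; apply: Kp_ext; pw.
have g8a : UE m b + E m b = Ke m by apply: Kp_add; pw.
have g8b : UO m b.+1 + O m b.+1 = Ko m by apply: Kp_add; pw.
have g8c : UE m b.+2 + E m b.+2 = Ke m by apply: Kp_add; pw.
have g9a : E m b = E m b.+1 by apply: Kp_ext; pw.
have g9b : O m b + cc m b = O m b.+1 by apply: Kp_add; pw.
have g9c : O m b.+1 = O m b.+2 by apply: Kp_ext; pw.
have g9d : E m b.+1 + cc m b.+1 = E m b.+2 by apply: Kp_add; pw.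
have [g10 g10'] := tot_eo (ltnW hm2).
have g11 := alt_bound2 hm2 hb.
have g13 : Kp m odd = Ko m by [].
have g12 : cc m b + 'C(m.-1, b) <= 'C(m.-1, uphalf m.-1) + 'C(m, uphalf m).
  rewrite /cc Kp_bin addnC; apply: leq_add; exact: bin_max.
lia.
Qed.

Fixpoint dif (s t : seq bool) : nat :=
  match s, t with
  | a :: s', b :: t' => (a != b) + dif s' t'
  | _, _ => 0
  end.

Lemma sum_dif k (s t : seq bool) : size s = k -> size t = k ->
  \sum_(i < k) (nth false s i != nth false t i) = dif s t.
Proof.
elim: k s t => [|k IH] s t hs ht.
  by rewrite big_ord0; case: s t hs ht => [|? ?] [|? ?].
case: s hs => [|a s] //= [hs]; case: t ht => [|b t] //= [ht].
by rewrite big_ord_recl /= IH.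
Qed.

Lemma hadjE k (x y : bits k) : hadj x y = (dif x y == 1).
Proof.
rewrite /hadj -(sum_dif (size_tuple x) (size_tuple y)).
by congr (_ == 1); apply: eq_bigr => i _; rewrite !(tnth_nth false).
Qed.

Lemma dif_compl s t : dif (map negb s) (map negb t) = dif s t.
Proof. by elim: s t => [|a s IH] [|b t] //=; rewrite IH; case: a; case: b. Qed.

Lemma dif_sym s t : dif s t = dif t s.
Proof. by elim: s t => [|a s IH] [|b t] //=; rewrite IH eq_sym. Qed.

Lemma dif0 s t : size s = size t -> dif s t = 0 -> s = t.
Proof.
elim: s t => [|a s IH] [|b t] //= [hs]; case: (eqVneq a b) => [->|] //= h.
by rewrite (IH t).
Qed.

Lemma dif1 s t : size s = size t -> dif s t = 1 ->
  weight t = (weight s).+1 \/ weight s = (weight t).+1.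
Proof.
elim: s t => [|a s IH] [|b t] // [hs]; rewrite !weight_cons /=.
case: (eqVneq a b) => [->|ne] /= h.
  case: (IH t hs h) => ->; [left|right]; lia.
have e : dif s t = 0 by lia.
rewrite (dif0 hs e).
by case: a b ne {h} => [] [] //= _; [right|left].
Qed.

Section Key.
Variables (m : nat) (x' y' : bits m).

Let a := weight x'.
Let b := weight y'.
Let X := cons_tuple true (cons_tuple false x').
Let Y := cons_tuple true (cons_tuple false y').
Let Xb := [tuple of map negb x'].
Let Yb := [tuple of map negb y'].

Lemma W1 : count (fun z => (weight z == a.+1) && lexlt X z) (allb m.+2) =
  Kp m (fun j => j.+2 == a.+1) + count (fun z => (weight z == a) && lexlt x' z) (allb m).
Proof.
rewrite !count_allbS.
have c1 : count (fun s => (weight [:: true, true & s] == a.+1) && lexlt X [:: true, true & s]) (allb m) = Kp m (fun j => j.+2 == a.+1).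
  by apply: eq_count => s /=; rewrite andbT.
have c2 : count (fun s => (weight [:: true, false & s] == a.+1) && lexlt X [:: true, false & s]) (allb m) = count (fun z => (weight z == a) && lexlt x' z) (allb m).
  by apply: eq_count => s /=.
have c3 : count (fun s => (weight [:: false, true & s] == a.+1) && lexlt X [:: false, true & s]) (allb m) = 0.
  by rewrite (eq_count (a2 := pred0)) ?count_pred0 // => s /=; rewrite andbF.
have c4 : count (fun s => (weight [:: false, false & s] == a.+1) && lexlt X [:: false, false & s]) (allb m) = 0.
  by rewrite (eq_count (a2 := pred0)) ?count_pred0 // => s /=; rewrite andbF.
by rewrite c1 c2 c3 c4 !addn0.
Qed.

Lemma W3 : count (fun z => (weight z == b.+1) && lexlt z Y) (allb m.+2) =
  count (fun z => (weight z == b) && lexlt z y') (allb m) + Kp m.+1 (fun j => j == b.+1).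
Proof.
rewrite (count_allbS m.+1).
have c1 : count (fun s => (weight (false :: s) == b.+1) && lexlt (false :: s) Y) (allb m.+1) = Kp m.+1 (fun j => j == b.+1).
  by apply: eq_count => s /=; rewrite andbT.
rewrite c1; congr (_ + _).
rewrite count_allbS.
have c2 : count (fun s => (weight [:: true, true & s] == b.+1) && lexlt [:: true, true & s] Y) (allb m) = 0.
  by rewrite (eq_count (a2 := pred0)) ?count_pred0 // => s /=; rewrite andbF.
have c3 : count (fun s => (weight [:: true, false & s] == b.+1) && lexlt [:: true, false & s] Y) (allb m) = count (fun z => (weight z == b) && lexlt z y') (allb m).
  by apply: eq_count => s /=.
by rewrite c2 c3.
Qed.

Lemma W2 : count (fun z => (weight z == weight Xb) && lexlt z Xb) (allb m) =
  count (fun z => (weight z == a) && lexlt x' z) (allb m).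
Proof.
rewrite count_compl; apply: eq_in_count => z; rewrite mem_allb => /eqP hz /=.
rewrite !weight_compl lexlt_compl ?hz ?size_tuple //; congr (_ && _).
have := weight_le z; have := weight_le x'; rewrite hz size_tuple /a => h1 h2.
apply/eqP/eqP; lia.
Qed.

Lemma W4 : count (fun z => (weight z == weight Yb) && lexlt Yb z) (allb m) =
  count (fun z => (weight z == b) && lexlt z y') (allb m).
Proof.
rewrite count_compl; apply: eq_in_count => z; rewrite mem_allb => /eqP hz /=.
rewrite !weight_compl lexlt_compl ?hz ?size_tuple //; congr (_ && _).
have := weight_le z; have := weight_le y'; rewrite hz size_tuple /b => h1 h2.
apply/eqP/eqP; lia.
Qed.

Lemma key : ~~ odd m -> 2 <= m -> ~~ odd a -> dif x' y' = 1 ->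
  fn X + fn Y <= fn Xb + fn Yb + 3 * 2 ^ m + 'C(m.-1, uphalf m.-1) + 'C(m, uphalf m).
Proof.
move=> hm hm2 ha hd.
have hab : b = a.+1 \/ a = b.+1 := dif1 (etrans (size_tuple x') (esym (size_tuple y'))) hd.
have ham : a <= m by rewrite /a -{2}(size_tuple x') weight_le.
have hbm : b <= m by rewrite /b -{2}(size_tuple y') weight_le.
have hbodd : odd b.
  case: hab => e; move: ha; rewrite !oddE e; lia.
have wX : weight X = a.+1 by [].
have wY : weight Y = b.+1 by [].
have wXb : weight Xb = m - a by rewrite /= weight_compl size_tuple.
have wYb : weight Yb = m - b by rewrite /= weight_compl size_tuple.
set WX := count (fun z => (weight z == a) && lexlt x' z) (allb m).
set WY := count (fun z => (weight z == b) && lexlt z y') (allb m).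
have eX : fn X = Kp m.+2 (fun j => odd j && (j < a.+1)) + (Kp m (fun j => j.+2 == a.+1) + WX) + 1.
  rewrite fn_odd ?wX //; rewrite W1 //.
have eY : fn Y = Kp m.+2 odd + Kp m.+2 (fun j => ~~ odd j && (b.+1 < j)) + (WY + Kp m.+1 (fun j => j == b.+1)) + 1.
  rewrite fn_even; last by rewrite wY /= hbodd.
  by rewrite wY W3.
have eXb : fn Xb = Kp m odd + Kp m (fun j => ~~ odd j && (m - a < j)) + WX + 1.
  rewrite fn_even; last by rewrite wXb oddE; move: hm ha; rewrite !oddE; lia.
  by rewrite W2 wXb.
have eYb : fn Yb = Kp m (fun j => odd j && (j < m - b)) + WY + 1.
  rewrite fn_odd; last by rewrite wYb oddE; move: hm hbodd; rewrite !oddE; lia.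
  by rewrite W4 wYb.
case: hab => e.
- have h' : a.+1 <= m by rewrite -e.
  have := final1 hm hm2 ha h'.
  rewrite eX eY eXb eYb; rewrite e; lia.
- have h' : b.+1 <= m by rewrite -e.
  have := final2 hm hm2 hbodd h'.
  rewrite eX eY eXb eYb; rewrite e; lia.
Qed.

End Key.

Unset Implicit Arguments.
Theorem theorem2p8 (n : nat) (hn : 5 <= n) (hev : ~~ odd n) (x y : bits n) :
  hadj x y -> fn x + fn y = strQ n ->
  take 2 x = [:: true; false] -> take 2 y = [:: true; false] ->
  strQ n <= strQ (n - 2) + 3 * 2 ^ (n - 2)
            + 'C(n - 3, uphalf (n - 3)) + 'C(n - 2, uphalf (n - 2)).
Proof.
move: n hn hev x y => [|[|m]] // hn hev x y hxy hstr hx hy.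
have e2 : m.+2 - 2 = m by lia.
have e3 : m.+2 - 3 = m.-1 by lia.
rewrite e2 e3 -hstr.
move: hx hy hxy {hstr}.
case/tupleP: x => a0 x1; case/tupleP: x1 => a1 x'.
case/tupleP: y => b0 y1; case/tupleP: y1 => b1 y'.
move=> /= [-> -> _] [-> -> _] hxy.
have hm : ~~ odd m by move: hev => /=; rewrite negbK.
have hm2 : 2 <= m by lia.
have hd : dif x' y' = 1 by move: hxy; rewrite hadjE => /eqP /= h; lia.
have hs : fn [tuple of map negb x'] + fn [tuple of map negb y'] <= strQ m.
  rewrite /strQ.
  apply: (@leq_bigmax_cond _ (fun p : bits m * bits m => hadj p.1 p.2) (fun p => fn p.1 + fn p.2) ([tuple of map negb x'], [tuple of map negb y'])).
  by rewrite /= hadjE /= dif_compl hd.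
case: (boolP (odd (weight x'))) => ha.
- have hd' : dif y' x' = 1 by rewrite dif_sym.
  have hb : ~~ odd (weight y').
    have := dif1 (etrans (size_tuple x') (esym (size_tuple y'))) hd.
    by case => e; move: ha; rewrite !oddE e; lia.
  rewrite addnC; apply: leq_trans (key hm hm2 hb hd') _.
  have hs' : fn [tuple of map negb y'] + fn [tuple of map negb x'] <= strQ m by rewrite addnC.
  lia.
- apply: leq_trans (key hm hm2 ha hd) _.
  lia.
Qed.
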